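(* Let $A=(a_{ij})$ be a real symmetric $n\times n$ matrix with positive diagonal entries, and suppose there is $\gamma>0$ such that $a_{ii}a_{jj}\ge\gamma^2a_{ij}^2$ for all $i\ne j$. Then every eigenvalue of $A$ lies in $\bigcup_{i=1}^n B\big(a_{ii},a_{ii}(n-1)/\gamma\big)$, where $B(c,r)$ denotes the closed ball (interval) of center $c$ and radius $r$. *)

(* Defs.v *)
From mathcomp Require Import all_boot all_order all_algebra.
Set Implicit Arguments. Unset Strict Implicit. Unset Printing Implicit Defensive.

(* Main.v *)
Require Import Defs.
From mathcomp Require Import all_boot all_order all_algebra.
Import Order.TTheory GRing.Theory Num.Theory.
Local Open Scope ring_scope.
From mathcomp Require Import ring lra.
Lemma key (R : realFieldType) (x y z a b g : R) : 0 <= x -> 0 <= y -> 0 <= z -> 0 < a -> 0 < b -> 0 < g ->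
  g ^+ 2 * y ^+ 2 <= a * b -> b * x ^+ 2 <= a * z ^+ 2 -> x * y <= z * a / g.
Proof.
move=> x0 y0 z0 a0 b0 g0 h1 h2.
have h3 : (x * y * g) ^+ 2 <= (a * z) ^+ 2.
  have -> : (x * y * g) ^+ 2 = x ^+ 2 * (g ^+ 2 * y ^+ 2) by ring.
  apply: (le_trans (y := x ^+ 2 * (a * b))).
    by apply: ler_wpM2l => //; rewrite exprn_ge0.
  have -> : x ^+ 2 * (a * b) = a * (b * x ^+ 2) by ring.
  have -> : (a * z) ^+ 2 = a * (a * z ^+ 2) by ring.
  by apply: ler_wpM2l => //; rewrite ltW.
have h4 : x * y * g <= a * z.
  by rewrite -(ler_pXn2r (n:=2)) // nnegrE ?mulr_ge0 // ltW.
rewrite ler_pdivlMr //. lra.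
Qed.

Theorem theorem6p4 (R : realFieldType) (n : nat) (A : 'M[R]_n) (gamma : R)
  (hsym : A^T = A)
  (hdiag : forall i : 'I_n, 0 < A i i)
  (hgamma : 0 < gamma)
  (hoff : forall i j : 'I_n, i != j -> gamma ^+ 2 * A i j ^+ 2 <= A i i * A j j)
  (lambda : R) (hev : eigenvalue A lambda) :
  exists i : 'I_n, `|lambda - A i i| <= A i i * (n%:R - 1) / gamma.
Proof.
have [v hv vn0] := eigenvalueP hev.
have [k0 hk0] : exists k : 'I_n, v 0 k != 0.
  apply/existsP; apply: contraR vn0 => /existsPn H.
  apply/eqP/matrixP => i j; rewrite !mxE ord1; exact/eqP/negPn/H.
set F := fun j : 'I_n => A j j * v 0 j ^+ 2.
case: (arg_maxP F (P := xpredT) (i0 := k0) isT) => i _ imax.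
exists i.
have hi : \sum_j v 0 j * A j i = lambda * v 0 i.
  by have := congr1 (fun M : 'rV[R]_n => M 0 i) hv; rewrite !mxE.
have vi0 : v 0 i != 0.
  have := imax k0 isT; rewrite /F; apply: contraTneq => ->.
  rewrite expr0n mulr0 -ltNge; apply: mulr_gt0 => //.
  by rewrite exprn_even_gt0.
have e : (lambda - A i i) * v 0 i = \sum_(j | j != i) v 0 j * A j i.
  rewrite mulrBl -hi (bigD1 i) //=.
  by rewrite (mulrC (A i i)) addrAC subrr add0r.
have hb : forall j, j != i -> `|v 0 j * A j i| <= `|v 0 i| * A i i / gamma.
  move=> j ji; rewrite normrM; apply: (@key _ _ _ _ _ (A j j)) => //.
  - by rewrite real_normK ?num_real // (mulrC (A i i)); exact: hoff.
  - by rewrite !real_normK ?num_real //; have := imax j isT; rewrite /F /= mulrC.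
have : `|lambda - A i i| * `|v 0 i| <= (`|v 0 i| * A i i / gamma) *+ #|predC1 i|.
  rewrite -normrM e -sumr_const.
  apply: (le_trans (ler_norm_sum _ _ _)).
  apply: ler_sum => j; exact: hb.
rewrite cardC1 card_ord.
have n0 : (0 < n)%N := leq_ltn_trans (leq0n _) (ltn_ord k0).
rewrite -mulr_natr => H.
have e1 : (n.-1)%:R = n%:R - 1 :> R by rewrite -{2}(prednK n0) -natr1 addrK.
rewrite e1 in H.
have vp : 0 < `|v 0 i| by rewrite normr_gt0.
rewrite -(ler_pM2r vp); apply: (le_trans H).
rewrite le_eqVlt; apply/orP; left; apply/eqP; ring.
Qed.
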